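(* Let $n\ge 1$. Any two maximal Diophantine graphs of order $n$, $(G_1,f_1)$ and $(G_2,f_2)$ with Diophantine labelings $f_1,f_2$, are labeling isomorphic: there is a graph isomorphism $\varphi:V(G_1)\to V(G_2)$ with $f_1=f_2\circ\varphi$.
   Context: A graph $G$ with $n$ vertices is Diophantine if there is a bijection $f:V(G)\to\{1,2,\dots,n\}$ (a Diophantine labeling) such that $\gcd(f(u),f(v))$ divides $n$ for every edge $uv$. A maximal Diophantine graph of order $n$ is a Diophantine graph with $n$ vertices such that adding any new edge yields a graph that is not Diophantine. *)

(* Defs.v *)
From mathcomp Require Import all_boot.
Set Implicit Arguments. Unset Strict Implicit. Unset Printing Implicit Defensive.

Definition simple_graph (V : finType) (e : rel V) : Prop :=
  symmetric e /\ irreflexive e.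

Definition label_bij (n : nat) (V : finType) (f : V -> nat) : Prop :=
  [/\ forall v, 1 <= f v <= n,
      injective f &
      forall k, 1 <= k <= n -> exists v, f v = k].

Definition diophantine_labeling (n : nat) (V : finType) (e : rel V) (f : V -> nat) : Prop :=
  label_bij n f /\ forall u v, e u v -> gcdn (f u) (f v) %| n.

Definition diophantine (V : finType) (e : rel V) : Prop :=
  exists f : V -> nat, diophantine_labeling #|V| e f.

Definition add_edge (V : finType) (e : rel V) (u v : V) : rel V :=
  fun x y => [|| e x y, (x == u) && (y == v) | (x == v) && (y == u)].

Definition maximal_diophantine (n : nat) (V : finType) (e : rel V) : Prop :=
  [/\ simple_graph e, #|V| = n, diophantine e &
      forall u v : V, u != v -> ~~ e u v -> ~ diophantine (add_edge e u v)].

(* Main.v *)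
Require Import Defs.
From mathcomp Require Import all_boot.

Lemma edge_char n (V : finType) (e : rel V) (f : V -> nat) :
  maximal_diophantine n e -> diophantine_labeling n e f ->
  forall x y, e x y = (x != y) && (gcdn (f x) (f y) %| n).
Proof.
move=> [[Hsym Hirr] Hcard _ Hmax] [Hb Hd] x y.
case Exy: (e x y).
  have Hne : x != y by apply/eqP=> Exy'; subst y; rewrite Hirr in Exy.
  by rewrite Hne (Hd _ _ Exy).
case: (eqVneq x y) => //= Hne.
apply/esym/negbTE/negP=> Hg; apply: (Hmax x y Hne); first by rewrite Exy.
exists f; split; first by rewrite Hcard.
move=> a b; rewrite /add_edge => /or3P [Hab|/andP[/eqP-> /eqP->]|/andP[/eqP-> /eqP->]].
- by rewrite Hcard; apply: Hd.
- by rewrite Hcard.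
- by rewrite Hcard gcdnC.
Qed.

Theorem mainTheorem2 (n : nat) (V1 V2 : finType) (e1 : rel V1) (e2 : rel V2)
    (f1 : V1 -> nat) (f2 : V2 -> nat) :
  1 <= n ->
  maximal_diophantine n e1 -> diophantine_labeling n e1 f1 ->
  maximal_diophantine n e2 -> diophantine_labeling n e2 f2 ->
  exists phi : V1 -> V2,
    [/\ bijective phi,
        forall x y : V1, e2 (phi x) (phi y) = e1 x y &
        forall x : V1, f1 x = f2 (phi x)].
Proof.
move=> Hn M1 L1 M2 L2.
have C1 := @edge_char _ _ _ _ M1 L1; have C2 := @edge_char _ _ _ _ M2 L2.
case: L1 => [[r1 i1 s1] _]; case: L2 => [[r2 i2 s2] _].
have [v0 _] : exists v, f2 v = 1 by apply: s2; rewrite leqnn.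
have [w0 _] : exists v, f1 v = 1 by apply: s1; rewrite leqnn.
pose phi x := odflt v0 [pick v | f2 v == f1 x].
pose psi y := odflt w0 [pick v | f1 v == f2 y].
have Hphi x : f2 (phi x) = f1 x.
  rewrite /phi; case: pickP => [v /eqP //|H].
  have [v Hv] := s2 (f1 x) (r1 x); by have := H v; rewrite Hv eqxx.
have Hpsi y : f1 (psi y) = f2 y.
  rewrite /psi; case: pickP => [v /eqP //|H].
  have [v Hv] := s1 (f2 y) (r2 y); by have := H v; rewrite Hv eqxx.
have Hb : bijective phi.
  exists psi => [x|y].
    by apply: i1; rewrite Hpsi Hphi.
  by apply: i2; rewrite Hphi Hpsi.
exists phi; split => //.
move=> x y.
rewrite C1 C2 !Hphi; congr (_ && _).
by rewrite (inj_eq (bij_inj Hb)).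
Qed.
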